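(* Let $x:\mathbb{Z}^2\to\mathbb{RP}^n$ be a Q-net in general position (in particular, no quadrilateral strip of $x$ is contained in a plane). Then the following are equivalent: (i) $x$ is a multi-Q-net. (ii) Every two parameter lines of $x$ of the same direction are in perspective with respect to a point, i.e. for all $i_0\neq i_1$ there is a point $c$ such that $x_{i_0,j},x_{i_1,j},c$ are collinear for all $j$, and for all $j_0\ne j_1$ there is a point $c'$ such that $x_{i,j_0},x_{i,j_1},c'$ are collinear for all $i$. (iii) Every two neighboring parameter lines of $x$ ($x_{i,\cdot}$ and $x_{i+1,\cdot}$, resp. $x_{\cdot,j}$ and $x_{\cdot,j+1}$) are in perspective with respect to a point. (iv) There exist $\mathbf{p},\mathbf{q}:\mathbb{Z}\to\mathbb{R}^{n+1}$ such that $x_{i,j}=[\mathbf{p}_i+\mathbf{q}_j]$ for all $i,j$. (v) Both Laplace transforms of $x$ degenerate to curves, i.e. $y^1_{i,j}$ is independent of $j$ and $y^2_{i,j}$ is independent of $i$.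
   Context: A Q-net is a map $x:\mathbb{Z}^2\to\mathbb{RP}^n$, $x_{i,j}:=x(i,j)$, such that for all $i,j$ the points $x_{i,j},x_{i+1,j},x_{i+1,j+1},x_{i,j+1}$ are coplanar. A multi-Q-net is a map $x:\mathbb{Z}^2\to\mathbb{RP}^n$ such that for all $i_0\neq i_1$, $j_0\neq j_1$ the points $x_{i_0,j_0},x_{i_0,j_1},x_{i_1,j_1},x_{i_1,j_0}$ are coplanar. For an elementary quadrilateral of a Q-net, the Laplace points are $y^1_{i,j}$ = the intersection of the lines $x_{i,j}x_{i+1,j}$ and $x_{i,j+1}x_{i+1,j+1}$, and $y^2_{i,j}$ = the intersection of the lines $x_{i,j}x_{i,j+1}$ and $x_{i+1,j}x_{i+1,j+1}$; the nets $y^1,y^2$ are the Laplace transforms of $x$. For $\mathbf{v}\in\mathbb{R}^{n+1}\setminus\{0\}$, $[\mathbf{v}]$ denotes the corresponding point of $\mathbb{RP}^n$. The parameter lines of $x$ are the polygons $x_{i,\cdot}$ and $x_{\cdot,j}$. *)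

(* Defs.v *)
(* Points of RP^n are represented by nonzero row vectors of
   'rV[R]_(n.+1); projective notions are expressed via matrix rank. *)
From HB Require Import structures.
From mathcomp Require Import all_boot all_order all_algebra.
Set Implicit Arguments. Unset Strict Implicit. Unset Printing Implicit Defensive.
Import Order.TTheory GRing.Theory Num.Theory.
Local Open Scope ring_scope.

Section Defs.
Variables (R : realFieldType) (n : nat).
Notation vec := 'rV[R]_(n.+1).

Definition proj_eq (u v : vec) : Prop := exists k : R, k != 0 /\ u = k *: v.

Definition collinear3 (a b c : vec) : Prop :=
  (\rank (col_mx a (col_mx b c)) <= 2)%N.

Definition coplanar4 (a b c d : vec) : Prop :=
  (\rank (col_mx a (col_mx b (col_mx c d))) <= 3)%N.

Definition Qnet (x : int -> int -> vec) : Prop :=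
  forall i j : int, coplanar4 (x i j) (x (i + 1) j) (x (i + 1) (j + 1)) (x i (j + 1)).

Definition multiQnet (x : int -> int -> vec) : Prop :=
  forall i0 i1 j0 j1 : int, i0 != i1 -> j0 != j1 ->
    coplanar4 (x i0 j0) (x i0 j1) (x i1 j1) (x i1 j0).

Definition general_position (x : int -> int -> vec) : Prop :=
  (forall i j, x i j != 0) /\
  (forall i1 j1 i2 j2 i3 j3 : int,
      (i1, j1) != (i2, j2) -> (i1, j1) != (i3, j3) -> (i2, j2) != (i3, j3) ->
      ~ collinear3 (x i1 j1) (x i2 j2) (x i3 j3)) /\
  (forall i : int, ~ exists P : 'M[R]_(3, n.+1),
      forall j, submx (x i j) P && submx (x (i + 1) j) P) /\
  (forall j : int, ~ exists P : 'M[R]_(3, n.+1),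
      forall i, submx (x i j) P && submx (x i (j + 1)) P).

Definition rows_in_perspective (x : int -> int -> vec) (i0 i1 : int) : Prop :=
  exists c : vec, c != 0 /\ forall j, collinear3 (x i0 j) (x i1 j) c.

Definition cols_in_perspective (x : int -> int -> vec) (j0 j1 : int) : Prop :=
  exists c : vec, c != 0 /\ forall i, collinear3 (x i j0) (x i j1) c.

Definition laplace1 (x : int -> int -> vec) (i j : int) (y : vec) : Prop :=
  y != 0 /\ collinear3 (x i j) (x (i + 1) j) y /\
  collinear3 (x i (j + 1)) (x (i + 1) (j + 1)) y.

Definition laplace2 (x : int -> int -> vec) (i j : int) (y : vec) : Prop :=
  y != 0 /\ collinear3 (x i j) (x i (j + 1)) y /\
  collinear3 (x (i + 1) j) (x (i + 1) (j + 1)) y.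

End Defs.

(* Main.v *)
Require Import Defs.
From HB Require Import structures.
From mathcomp Require Import all_boot all_order all_algebra zify.
From Stdlib Require Import IndefiniteDescription Classical_Prop.
Set Implicit Arguments. Unset Strict Implicit. Unset Printing Implicit Defensive.
Import Order.TTheory GRing.Theory Num.Theory.
Local Open Scope ring_scope.

Section Tool.
Variables (R : realFieldType) (n : nat).
Notation vec := 'rV[R]_(n.+1).
Implicit Types a b c d u v w e f : vec.

Lemma rk_vec v : (\rank v <= 1)%N.
Proof. exact: rank_leq_row. Qed.

Lemma rk_vec1 v : v != 0 -> \rank v = 1%N.
Proof. by move=> nz; apply/eqP; rewrite eqn_leq rank_leq_row lt0n mxrank_eq0 nz. Qed.

Lemma rk_adds m1 m2 (A : 'M[R]_(m1, n.+1)) (B : 'M[R]_(m2, n.+1)) :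
  (\rank (A + B)%MS <= \rank A + \rank B)%N.
Proof. by have [] := mxrank_adds_leqif A B. Qed.

Lemma rk_add1 m1 (A : 'M[R]_(m1, n.+1)) v :
  (\rank (A + v)%MS <= \rank A + 1)%N.
Proof. by apply: leq_trans (rk_adds _ _) _; rewrite leq_add2l rk_vec. Qed.

Lemma rk2 a b : (\rank (a + b)%MS <= 2)%N.
Proof. by apply: leq_trans (rk_add1 _ _) _; rewrite (leq_add2r 1 _ 1) rk_vec. Qed.

Lemma rk3 a b c : (\rank (a + b + c)%MS <= 3)%N.
Proof. by apply: leq_trans (rk_add1 _ _) _; rewrite (leq_add2r 1 _ 2) rk2. Qed.

Lemma col3E a b c : collinear3 a b c <-> (\rank (a + b + c)%MS <= 2)%N.
Proof.
rewrite /collinear3 -addsmxE -(adds_eqmx (eqmx_refl a) (addsmxE b c)) addsmxA.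
by [].
Qed.

Lemma cop4E a b c d : coplanar4 a b c d <-> (\rank (a + b + c + d)%MS <= 3)%N.
Proof.
rewrite /coplanar4 -addsmxE -(adds_eqmx (eqmx_refl a) (addsmxE b _)).
rewrite -(adds_eqmx (eqmx_refl a) (adds_eqmx (eqmx_refl b) (addsmxE c d))) !addsmxA.
by [].
Qed.

Lemma sub_of_rank m1 m2 (A : 'M[R]_(m1, n.+1)) (B : 'M[R]_(m2, n.+1)) :
  (A <= B)%MS -> (\rank B <= \rank A)%N -> (B <= A)%MS.
Proof.
move=> sAB le; have [_ <-] := mxrank_leqif_sup sAB.
by rewrite eqn_leq le mxrankS.
Qed.

Lemma proj_of_rank1 u v : u != 0 -> v != 0 -> (\rank (u + v)%MS <= 1)%N -> proj_eq u v.
Proof.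
move=> nu nv le.
have suv : (u <= v)%MS.
  have : (u + v <= v)%MS by apply: sub_of_rank; rewrite ?addsmxSr // rk_vec1.
  by rewrite addsmx_sub => /andP[].
case/submxP: suv => D eD; exists (D 0 0); split.
  by apply: contraNneq nu => D0; rewrite eD [D]mx11_scalar D0 mul_scalar_mx scale0r.
by rewrite eD {1}[D]mx11_scalar mul_scalar_mx.
Qed.

Lemma col3_sub m m' (S : 'M[R]_(m, n.+1)) u v (w : 'M[R]_(m', n.+1)) :
  (\rank S <= 2)%N -> (2 <= \rank (u + v)%MS)%N -> (u <= S)%MS -> (v <= S)%MS ->
  (w <= S)%MS -> (w <= u + v)%MS.
Proof.
move=> rS ruv uS vS wS; apply: submx_trans wS _; apply: sub_of_rank.
  by rewrite addsmx_sub uS.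
exact: leq_trans rS ruv.
Qed.

Lemma uniq_pt u v a b c d : u != 0 -> v != 0 -> (u <= a + b)%MS -> (v <= a + b)%MS ->
  (u <= c + d)%MS -> (v <= c + d)%MS -> (2 < \rank (a + b + c)%MS)%N -> proj_eq u v.
Proof.
move=> nu nv ua va uc vc r3.
case: (leqP (\rank (u + v)%MS) 1) => [|r2]; first exact: proj_of_rank1.
have abuv : (a + b <= u + v)%MS.
  by apply: (col3_sub (S := (a + b)%MS)) => //; rewrite ?rk2.
have : (a + b + c <= c + d)%MS.
  rewrite addsmx_sub addsmxSl andbT (submx_trans abuv) //.
  by rewrite addsmx_sub uc vc.
by move/mxrankS/leq_trans/(_ (rk2 c d)); rewrite leqNgt r3.
Qed.

Lemma ex_nz m (A : 'M[R]_(m, n.+1)) : (0 < \rank A)%N -> exists y : vec, y != 0 /\ (y <= A)%MS.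
Proof.
rewrite lt0n mxrank_eq0 => nz; exists (nz_row A); split; last exact: nz_row_sub.
by rewrite nz_row_eq0.
Qed.

Lemma ex_cap a b c d : (\rank (a + b + c + d)%MS <= 3)%N -> (2 <= \rank (a + b)%MS)%N ->
  (2 <= \rank (c + d)%MS)%N -> exists y : vec, [/\ y != 0, (y <= a + b)%MS & (y <= c + d)%MS].
Proof.
move=> r4 rab rcd.
have := mxrank_sum_cap (a + b)%MS (c + d)%MS; rewrite !addsmxA => e.
have : (0 < \rank ((a + b) :&: (c + d))%MS)%N.
  rewrite lt0n; apply/negP => /eqP r0; move: e; rewrite r0 addn0 => e.
  have : (4 <= 3)%N by apply: leq_trans r4; rewrite e; exact: (leq_add rab rcd).
  by [].
case/ex_nz => y [ny yc]; exists y; split => //.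
  exact: submx_trans yc (capmxSl _ _).
exact: submx_trans yc (capmxSr _ _).
Qed.

Lemma proj_eqmx u v : proj_eq u v -> (u :=: v)%MS.
Proof. by case=> k [nk ->]; apply: eqmx_scale. Qed.

Lemma proj_sym u v : proj_eq u v -> proj_eq v u.
Proof.
case=> k [nk ->]; exists k^-1; split; first by rewrite invr_eq0.
by rewrite scalerA mulVf // scale1r.
Qed.

Lemma proj_nz u v : u != 0 -> proj_eq u v -> v != 0.
Proof. by move=> nu [k [_ e]]; apply: contraNneq nu => v0; rewrite e v0 scaler0. Qed.

End Tool.


Lemma int_ind2 (P : int -> Prop) : P 0 -> (forall i, P i -> P (i + 1)) ->
  (forall i, P (i + 1) -> P i) -> forall i, P i.
Proof.
move=> P0 Pu Pd; case=> m.
  elim: m => // m IH; have -> : Posz m.+1 = Posz m + 1 by lia.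
  exact: Pu.
elim: m => [|m IH]; apply: Pd.
  by have -> : Negz 0 + 1 = 0 by lia.
by have -> : Negz m.+1 + 1 = Negz m by lia.
Qed.

Lemma int_chain (T : Type) (P : int -> T -> Prop) (Rl : int -> T -> T -> Prop) (t0 : T) :
  P 0 t0 -> (forall k t, P k t -> exists t', P (k + 1) t' /\ Rl k t t') ->
  (forall k t', P (k + 1) t' -> exists t, P k t /\ Rl k t t') ->
  exists s : int -> T, s 0 = t0 /\ forall k, P k (s k) /\ Rl k (s k) (s (k + 1)).
Proof.
move=> P0 Hu Hd.
have [up Hup] : exists up : int -> T -> T,
    forall k t, P k t -> P (k + 1) (up k t) /\ Rl k t (up k t).
  have H : forall kt : int * T, exists t', P kt.1 kt.2 -> P (kt.1 + 1) t' /\ Rl kt.1 kt.2 t'.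
    move=> [k t]; case: (classic (P k t)) => [/Hu [t' Ht']|nP]; first by exists t'.
    by exists t0.
  exists (fun k t => proj1_sig (constructive_indefinite_description _ (H (k, t)))).
  move=> k t; exact: (proj2_sig (constructive_indefinite_description _ (H (k, t)))).
have [dn Hdn] : exists dn : int -> T -> T,
    forall k t', P (k + 1) t' -> P k (dn k t') /\ Rl k (dn k t') t'.
  have H : forall kt : int * T, exists t, P (kt.1 + 1) kt.2 -> P kt.1 t /\ Rl kt.1 t kt.2.
    move=> [k t']; case: (classic (P (k + 1) t')) => [/Hd [t Ht]|nP]; first by exists t.
    by exists t0.
  exists (fun k t => proj1_sig (constructive_indefinite_description _ (H (k, t)))).
  move=> k t; exact: (proj2_sig (constructive_indefinite_description _ (H (k, t)))).
pose su := fix su (m : nat) : T := if m is m'.+1 then up (Posz m') (su m') else t0.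
pose sd := fix sd (m : nat) : T := if m is m'.+1 then dn (Negz m') (sd m') else t0.
pose s := fun k : int => match k with Posz m => su m | Negz m => sd m.+1 end.
have Pu : forall m, P (Posz m) (su m).
  elim=> // m IH /=; have -> : Posz m.+1 = Posz m + 1 by lia.
  by case: (Hup _ _ IH).
have Pd : forall m, P (Negz m + 1) (sd m).
  elim=> [|m IH]; first by have -> : Negz 0 + 1 = 0 by lia.
  have -> : Negz m.+1 + 1 = Negz m by lia.
  by case: (Hdn _ _ IH).
have sS : forall m, s (Negz m + 1) = sd m.
  by case=> [|m]; [have -> : Negz 0 + 1 = 0 by lia | have -> : Negz m.+1 + 1 = Negz m by lia].
exists s; split => // -[m|m].
  have -> : Posz m + 1 = Posz m.+1 by lia.
  by rewrite /=; case: (Hup _ _ (Pu m)).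
by rewrite sS /=; case: (Hdn _ _ (Pd m)).
Qed.


Ltac msub := match goal with
 | |- is_true (submx ?A ?A) => apply: submx_refl
 | |- is_true (submx (addsmx _ _) _) => rewrite addsmx_sub; apply/andP; split; msub
 | |- _ => first [ assumption
                 | apply: (submx_trans _ (addsmxSl _ _)); msub
                 | apply: (submx_trans _ (addsmxSr _ _)); msub ]
end.

Section Tool2.
Variables (R : realFieldType) (n : nat).
Notation vec := 'rV[R]_(n.+1).
Implicit Types a b c d u v w e f t : vec.

Lemma nc2 a b c : (2 < \rank (a + b + c)%MS)%N -> (2 <= \rank (a + b)%MS)%N.
Proof. by move=> h; have := leq_trans h (rk_add1 _ _); rewrite addn1 ltnS. Qed.

Lemma col3_of_sub a b c : (c <= a + b)%MS -> collinear3 a b c.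
Proof.
move=> cab; apply/col3E; apply: leq_trans (rk2 a b); apply: mxrankS.
by rewrite addsmx_sub cab submx_refl.
Qed.

Lemma col3_mono a b c c' : collinear3 a b c -> (c' <= c)%MS -> collinear3 a b c'.
Proof.
move=> /col3E h cc; apply/col3E; apply: leq_trans h; apply: mxrankS.
by rewrite addsmxS.
Qed.

Lemma col3_sub3 a b c u v w : collinear3 a b c -> (2 <= \rank (u + v)%MS)%N ->
  (u <= a + b + c)%MS -> (v <= a + b + c)%MS -> (w <= a + b + c)%MS -> (w <= u + v)%MS.
Proof. by move=> /col3E; apply: col3_sub. Qed.

Lemma subN_le a b e : (b - a <= e)%MS -> (a - b <= e)%MS.
Proof. by move=> h; rewrite -opprB (eqmx_opp (b - a)). Qed.

Lemma resc t w e : (w <= t + e)%MS -> ~~ (w <= e)%MS ->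
  exists t', proj_eq w t' /\ (t' - t <= e)%MS.
Proof.
case/sub_addsmxP=> uu ew nwe.
set al := uu.1 0 0; set be := uu.2 0 0.
have ew' : w = al *: t + be *: e.
  by rewrite ew {1}[uu.1]mx11_scalar {1}[uu.2]mx11_scalar !mul_scalar_mx.
have nal : al != 0.
  by apply: contraNneq nwe => a0; rewrite ew' a0 scale0r add0r scalemx_sub.
exists (al^-1 *: w); split.
  by exists al; split => //; rewrite scalerA mulfV // scale1r.
rewrite ew' scalerDr !scalerA mulVf // scale1r addrC addKr.
exact: scalemx_sub.
Qed.

Lemma corner D N1 N2 e f T T1 T2 : D != 0 -> proj_eq N1 T1 -> proj_eq N2 T2 ->
  (T - T1 <= e)%MS -> (T - T2 <= f)%MS -> (D <= N1 + e)%MS -> (D <= N2 + f)%MS ->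
  (2 < \rank (N1 + N2 + D)%MS)%N -> proj_eq D T.
Proof.
move=> nD p1 p2 s1 s2 d1 d2 r3.
have T1N1 : (T1 <= N1)%MS by rewrite (proj_eqmx p1).
have T2N2 : (T2 <= N2)%MS by rewrite (proj_eqmx p2).
have TN1 : (T <= N1 + e)%MS.
  rewrite -[T](subrK T1) addmx_sub //; first exact: submx_trans s1 (addsmxSr _ _).
  exact: submx_trans T1N1 (addsmxSl _ _).
have TN2 : (T <= N2 + f)%MS.
  rewrite -[T](subrK T2) addmx_sub //; first exact: submx_trans s2 (addsmxSr _ _).
  exact: submx_trans T2N2 (addsmxSl _ _).
have [T0|nT] := eqVneq T 0.
  move: s1; rewrite T0 sub0r (eqmx_opp T1) -(proj_eqmx p1) => N1e.
  have : (N1 + N2 + D <= N2 + e)%MS.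
    rewrite !addsmx_sub (submx_trans N1e) ?addsmxSr ?addsmxSl //=.
    by rewrite (submx_trans d1) // addsmx_sub (submx_trans N1e) ?addsmxSr.
  by move/mxrankS/leq_trans/(_ (rk2 _ _)); rewrite leqNgt r3.
apply: (uniq_pt (a := N1) (b := e) (c := N2) (d := f)) => //.
apply: leq_trans r3 _; apply: mxrankS.
msub.
Qed.

End Tool2.


Section Net.
Variables (R : realFieldType) (n : nat).
Notation vec := 'rV[R]_(n.+1).
Variable x : int -> int -> vec.
Hypothesis GP : general_position x.

Lemma nzx i j : x i j != 0.
Proof. by case: GP. Qed.

Lemma gp3 i1 j1 i2 j2 i3 j3 :
  (i1, j1) != (i2, j2) -> (i1, j1) != (i3, j3) -> (i2, j2) != (i3, j3) ->
  (2 < \rank (x i1 j1 + x i2 j2 + x i3 j3)%MS)%N.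
Proof.
case: GP => _ [H _] d12 d13 d23; rewrite ltnNge; apply/negP => h.
by apply: (H _ _ _ _ _ _ d12 d13 d23); apply/col3E.
Qed.

Lemma center_gen (u v : int -> vec) a :
  (forall j, collinear3 (u j) (v j) a) ->
  (forall j, 2 < \rank (u (j + 1)%R + v (j + 1)%R + u j)%MS)%N ->
  (forall j, 2 < \rank (u (j + 1)%R + v (j + 1)%R + v j)%MS)%N ->
  (forall j, u j != 0) -> (forall j, v j != 0) -> a != 0 ->
  forall j, (2 <= \rank (u j + a)%MS)%N /\ (2 <= \rank (v j + a)%MS)%N.
Proof.
move=> hc h1 h2 nu nv na j.
have key : forall w : vec, w != 0 -> (\rank (w + a)%MS <= 1)%N ->
    (2 < \rank (u (j + 1)%R + v (j + 1)%R + w)%MS)%N -> False.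
  move=> w nw r1 r3; have [k [nk ew]] := proj_of_rank1 nw na r1.
  have := hc (j + 1); rewrite col3E => r2.
  have : (u (j + 1)%R + v (j + 1)%R + w <= u (j + 1)%R + v (j + 1)%R + a)%MS.
    by rewrite ew addsmxS // scalemx_sub.
  by move/mxrankS/leq_trans/(_ r2); rewrite leqNgt r3.
split; rewrite leqNgt; apply/negP; rewrite ltnS => r.
  exact: key (nu j) r (h1 j).
exact: key (nv j) r (h2 j).
Qed.


Lemma notsub (w e : vec) : (2 <= \rank (w + e)%MS)%N -> ~~ (w <= e)%MS.
Proof.
move=> r; apply/negP => we.
have : (w + e <= e)%MS by rewrite addsmx_sub we submx_refl.
by move/mxrankS/leq_trans/(_ (rk_vec e)); rewrite leqNgt r.
Qed.

Lemma dif1 (P P' Q : vec) : (P' + Q) - (P + Q) = P' - P.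
Proof. by rewrite opprD addrACA subrr addr0. Qed.

Lemma dif2 (P Q Q' : vec) : (P + Q') - (P + Q) = Q' - Q.
Proof. by rewrite opprD addrACA subrr add0r. Qed.

Lemma constrB :
  (forall i, rows_in_perspective x i (i + 1)) -> (forall j, cols_in_perspective x j (j + 1)) ->
  exists p q : int -> vec, forall i j, p i + q j != 0 /\ proj_eq (x i j) (p i + q j).
Proof.
move=> hr hc.
have [a Ha] : exists a : int -> vec, forall i, a i != 0 /\ forall j, collinear3 (x i j) (x (i + 1) j) (a i).
  exists (fun i => proj1_sig (constructive_indefinite_description _ (hr i))).
  move=> i; exact: (proj2_sig (constructive_indefinite_description _ (hr i))).
have [d Hd] : exists d : int -> vec, forall j, d j != 0 /\ forall i, collinear3 (x i j) (x i (j + 1)) (d j).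
  exists (fun j => proj1_sig (constructive_indefinite_description _ (hc j))).
  move=> j; exact: (proj2_sig (constructive_indefinite_description _ (hc j))).
have dd : forall i j : int, (i, j) != (i + 1, j) /\ (i, j) != (i, j + 1) /\ (i + 1, j) != (i, j + 1)
   /\ (i, j) != (i + 1, j + 1) /\ (i + 1, j) != (i + 1, j + 1) /\ (i, j + 1) != (i + 1, j + 1).
  by move=> i j; repeat split; rewrite xpair_eqE; lia.
have ra : forall i j, (2 <= \rank (x i j + a i)%MS)%N /\ (2 <= \rank (x (i + 1) j + a i)%MS)%N.
  move=> i; apply: (center_gen (u := x i) (v := x (i + 1))).
  - by case: (Ha i).
  - by move=> j; have [d1 [d2 [d3 [d4 [d5 d6]]]]] := dd i j; apply: gp3; rewrite // eq_sym.
  - by move=> j; have [d1 [d2 [d3 [d4 [d5 d6]]]]] := dd i j; apply: gp3; rewrite // eq_sym.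
  - by move=> j; apply: nzx.
  - by move=> j; apply: nzx.
  - by case: (Ha i).
have rd : forall i j, (2 <= \rank (x i j + d j)%MS)%N /\ (2 <= \rank (x i (j + 1) + d j)%MS)%N.
  move=> i j; apply: (center_gen (u := fun i => x i j) (v := fun i => x i (j + 1))).
  - by case: (Hd j).
  - by move=> k; have [d1 [d2 [d3 [d4 [d5 d6]]]]] := dd k j; apply: gp3; rewrite // eq_sym.
  - by move=> k; have [d1 [d2 [d3 [d4 [d5 d6]]]]] := dd k j; apply: gp3; rewrite // eq_sym.
  - by move=> k; apply: nzx.
  - by move=> k; apply: nzx.
  - by case: (Hd j).
have lr1 : forall i j, (x (i + 1) j <= x i j + a i)%MS.
  move=> i j; apply: (col3_sub3 (a := x i j) (b := x (i + 1) j) (c := a i)); try msub.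
    by case: (Ha i) => _; apply.
  by case: (ra i j).
have lr2 : forall i j, (x i j <= x (i + 1) j + a i)%MS.
  move=> i j; apply: (col3_sub3 (a := x i j) (b := x (i + 1) j) (c := a i)); try msub.
    by case: (Ha i) => _; apply.
  by case: (ra i j).
have lc1 : forall i j, (x i (j + 1) <= x i j + d j)%MS.
  move=> i j; apply: (col3_sub3 (a := x i j) (b := x i (j + 1)) (c := d j)); try msub.
    by case: (Hd j) => _; apply.
  by case: (rd i j).
have lc2 : forall i j, (x i j <= x i (j + 1) + d j)%MS.
  move=> i j; apply: (col3_sub3 (a := x i j) (b := x i (j + 1)) (c := d j)); try msub.
    by case: (Hd j) => _; apply.
  by case: (rd i j).
have [p [p0 Hp]] : exists p : int -> vec, p 0 = x 0 0 /\
    forall k, proj_eq (x k 0) (p k) /\ (p (k + 1)%R - p k <= a k)%MS.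
  apply: (int_chain (P := fun k t => proj_eq (x k 0) t) (Rl := fun k t t' => (t' - t <= a k)%MS)).
  - by exists 1; rewrite oner_eq0 scale1r.
  - move=> k t pt; apply: resc.
      by rewrite -(adds_eqmx (proj_eqmx pt) (eqmx_refl _)).
    by apply: notsub; case: (ra k 0).
  - move=> k t' pt; have [t [h1 h2]] : exists t, proj_eq (x k 0) t /\ (t - t' <= a k)%MS.
      apply: resc; first by rewrite -(adds_eqmx (proj_eqmx pt) (eqmx_refl _)).
      by apply: notsub; case: (ra k 0).
    by exists t; split => //; apply: subN_le.
have [r [r0 Hr]] : exists r : int -> vec, r 0 = x 0 0 /\
    forall k, proj_eq (x 0 k) (r k) /\ (r (k + 1)%R - r k <= d k)%MS.
  apply: (int_chain (P := fun k t => proj_eq (x 0 k) t) (Rl := fun k t t' => (t' - t <= d k)%MS)).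
  - by exists 1; rewrite oner_eq0 scale1r.
  - move=> k t pt; apply: resc.
      by rewrite -(adds_eqmx (proj_eqmx pt) (eqmx_refl _)).
    by apply: notsub; case: (rd 0 k).
  - move=> k t' pt; have [t [h1 h2]] : exists t, proj_eq (x 0 k) t /\ (t - t' <= d k)%MS.
      apply: resc; first by rewrite -(adds_eqmx (proj_eqmx pt) (eqmx_refl _)).
      by apply: notsub; case: (rd 0 k).
    by exists t; split => //; apply: subN_le.
pose q j := r j - x 0 0.
have dp : forall i, (p (i + 1)%R - p i <= a i)%MS by move=> i; case: (Hp i).
have dq : forall j, (q (j + 1)%R - q j <= d j)%MS.
  by move=> j; rewrite /q opprB addrA subrK; case: (Hr j).
have G : forall i j, proj_eq (x i j) (p i + q j).
  apply: int_ind2.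
  - by move=> j; rewrite p0 /q addrC subrK; case: (Hr j).
  - move=> i Qi; apply: int_ind2.
    + by rewrite /q r0 subrr addr0; case: (Hp (i + 1)).
    + move=> j Gj; have [d1 [d2 [d3 [d4 [d5 d6]]]]] := dd i j.
      apply: (corner (N1 := x i (j + 1)) (N2 := x (i + 1) j) (e := a i) (f := d j)
               (T1 := p i + q (j + 1)) (T2 := p (i + 1) + q j)) => //.
      * exact: nzx.
      * by rewrite dif1.
      * by rewrite dif2.
      * by apply: gp3; rewrite // eq_sym.
    + move=> j Gj; have [d1 [d2 [d3 [d4 [d5 d6]]]]] := dd i j.
      apply: (corner (N1 := x i j) (N2 := x (i + 1) (j + 1)) (e := a i) (f := d j)
               (T1 := p i + q j) (T2 := p (i + 1) + q (j + 1))) => //.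
      * exact: nzx.
      * by rewrite dif1.
      * by apply: subN_le; rewrite dif2.
      * by apply: gp3; rewrite // eq_sym.
  - move=> i Qi; apply: int_ind2.
    + by rewrite /q r0 subrr addr0; case: (Hp i).
    + move=> j Gj; have [d1 [d2 [d3 [d4 [d5 d6]]]]] := dd i j.
      apply: (corner (N1 := x (i + 1) (j + 1)) (N2 := x i j) (e := a i) (f := d j)
               (T1 := p (i + 1) + q (j + 1)) (T2 := p i + q j)) => //.
      * exact: nzx.
      * by apply: subN_le; rewrite dif1.
      * by rewrite dif2.
      * by apply: gp3; rewrite // eq_sym.
    + move=> j Gj; have [d1 [d2 [d3 [d4 [d5 d6]]]]] := dd i j.
      apply: (corner (N1 := x (i + 1) j) (N2 := x i (j + 1)) (e := a i) (f := d j)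
               (T1 := p (i + 1) + q j) (T2 := p i + q (j + 1))) => //.
      * exact: nzx.
      * by apply: subN_le; rewrite dif1.
      * by apply: subN_le; rewrite dif2.
      * by apply: gp3; rewrite // eq_sym.
exists p, q => i j; split; last exact: G.
exact: proj_nz (nzx i j) (G i j).
Qed.

End Net.


Section Tool3.
Variables (R : realFieldType) (n : nat).
Notation vec := 'rV[R]_(n.+1).

Lemma proj_trans (u v w : vec) : proj_eq u v -> proj_eq v w -> proj_eq u w.
Proof.
case=> k [nk ->] [l [nl ->]]; exists (k * l); split; first by rewrite mulf_neq0.
by rewrite scalerA.
Qed.

Lemma subB_le m (A : 'M[R]_(m, n.+1)) (u v : vec) : (u <= A)%MS -> (v <= A)%MS -> (u - v <= A)%MS.
Proof. by move=> uA vA; apply: addmx_sub => //; rewrite (eqmx_opp v). Qed.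

Lemma proj_sub (u T : vec) : proj_eq u T -> (T <= u)%MS.
Proof. by move/proj_eqmx => e; rewrite e. Qed.
End Tool3.

Section Net2.
Variables (R : realFieldType) (n : nat).
Notation vec := 'rV[R]_(n.+1).
Variable x : int -> int -> vec.
Hypothesis GP : general_position x.

Definition repr_pq (p q : int -> vec) := forall i j, p i + q j != 0 /\ proj_eq (x i j) (p i + q j).

Lemma dst (i j k l : int) : (i != k) || (j != l) -> (i, j) != (k, l).
Proof. by rewrite xpair_eqE negb_and. Qed.

Lemma r2row i j i' : i != i' -> (2 <= \rank (x i j + x i' j)%MS)%N.
Proof.
move=> nii; apply: (@nc2 _ _ _ _ (x i (j + 1))); apply: (gp3 GP); apply: dst; rewrite ?nii //.
  by apply/orP; right; apply/eqP; lia.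
by apply/orP; right; apply/eqP; lia.
Qed.

Lemma diff_nz p q i i' (j : int) : repr_pq p q -> i != i' -> p i - p i' != 0.
Proof.
move=> H nii; apply/negP => /eqP e.
have e' : p i = p i' by apply/eqP; rewrite -subr_eq0 e.
have := r2row j nii; apply/negP; rewrite -ltnNge ltnS.
have s : (x i j + x i' j <= (p i + q j)%R)%MS.
  rewrite addsmx_sub; apply/andP; split; first exact: proj_sub (proj_sym (H i j).2).
  by rewrite e'; exact: proj_sub (proj_sym (H i' j).2).
by apply: leq_trans (mxrankS s) (rk_vec _).
Qed.

Lemma diff_sub p q i i' j : repr_pq p q -> (p i - p i' <= x i j + x i' j)%MS.
Proof.
move=> H; rewrite -(dif1 (p i') (p i) (q j)); apply: subB_le.
  exact: submx_trans (proj_sub (H i j).2) (addsmxSl _ _).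
exact: submx_trans (proj_sub (H i' j).2) (addsmxSr _ _).
Qed.

Lemma C1row p q : repr_pq p q -> forall i0 i1, i0 != i1 -> rows_in_perspective x i0 i1.
Proof.
move=> H i0 i1 nii; exists (p i0 - p i1); split; first exact: diff_nz 0 H nii.
by move=> j; apply: col3_of_sub; apply: diff_sub.
Qed.

Lemma C0 p q : repr_pq p q -> multiQnet x.
Proof.
move=> H i0 i1 j0 j1 _ _; apply/cop4E.
apply: leq_trans (rk3 (x i0 j0) (x i0 j1) (x i1 j1)); apply: mxrankS.
rewrite addsmx_sub submx_refl /=.
apply: submx_trans (proj_sub (proj_sym (H i1 j0).2)) _.
have -> : p i1 + q j0 = (p i0 + q j0) - (p i0 + q j1) + (p i1 + q j1).
  by rewrite dif2 addrCA subrK.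
rewrite addmx_sub // ?subB_le //.
- by apply: submx_trans (proj_sub (H i0 j0).2) _; msub.
- by apply: submx_trans (proj_sub (H i0 j1).2) _; msub.
- by apply: submx_trans (proj_sub (H i1 j1).2) _; msub.
Qed.

Lemma C4row p q : repr_pq p q -> forall i j j' y y',
  laplace1 x i j y -> laplace1 x i j' y' -> proj_eq y y'.
Proof.
move=> H.
have key : forall i j y, laplace1 x i j y -> proj_eq y (p i - p (i + 1)).
  move=> i j y [ny [c1 c2]].
  have nii : i != i + 1 by apply/eqP; lia.
  apply: (uniq_pt (a := x i j) (b := x (i + 1) j) (c := x i (j + 1)) (d := x (i + 1) (j + 1))) => //.
  - exact: diff_nz 0 H nii.
  - by apply: (col3_sub3 c1); rewrite ?r2row //; msub.
  - exact: diff_sub.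
  - by apply: (col3_sub3 c2); rewrite ?r2row //; msub.
  - exact: diff_sub.
  - by apply: (gp3 GP); rewrite xpair_eqE; lia.
move=> i j j' y y' l1 l2.
exact: proj_trans (key _ _ _ l1) (proj_sym (key _ _ _ l2)).
Qed.

End Net2.


Section Pencil.
Variables (R : realFieldType) (n : nat).
Notation vec := 'rV[R]_(n.+1).
Variables (u v : int -> vec).
Hypothesis hc : forall j j', j != j' -> (\rank (u j + v j + u j' + v j')%MS <= 3)%N.
Hypothesis hn : forall j j', j != j' -> (2 < \rank (u j + v j + u j')%MS)%N.
Hypothesis hs : ~ exists P : 'M[R]_(3, n.+1), forall j, (u j <= P)%MS && (v j <= P)%MS.

Let L j := (u j + v j)%MS.

Lemma rL j : \rank (L j) = 2%N.
Proof.
apply/eqP; rewrite eqn_leq rk2 /=; apply: (@nc2 _ _ _ _ (u (j + 1))); apply: hn.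
by apply/eqP; lia.
Qed.

Lemma rS j j' : j != j' -> \rank (L j + L j')%MS = 3%N.
Proof.
move=> h; apply/eqP; rewrite eqn_leq /L addsmxA hc //=; apply: leq_trans (hn h) _.
by apply: mxrankS; msub.
Qed.

Lemma rC j j' : j != j' -> \rank (L j :&: L j')%MS = 1%N.
Proof.
move=> h; have := mxrank_sum_cap (L j) (L j'); rewrite rS // !rL.
by move/eqP; rewrite -[(2 + 2)%N]/(3 + 1)%N eqn_add2l => /eqP.
Qed.

Lemma pencil : exists c : vec, c != 0 /\ forall j, collinear3 (u j) (v j) c.
Proof.
have n01 : (0 : int) != 1 by [].
have [c [nc c01]] : exists c : vec, c != 0 /\ (c <= L 0 :&: L 1)%MS.
  by apply: ex_nz; rewrite rC.
have rc : \rank c = 1%N by apply: rk_vec1.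
have capc : (L 0 :&: L 1 <= c)%MS by apply: sub_of_rank c01 _; rewrite rc rC.
have c0 : (c <= L 0)%MS by apply: submx_trans c01 (capmxSl _ _).
have c1 : (c <= L 1)%MS by apply: submx_trans c01 (capmxSr _ _).
suff claim : forall j, (c <= L j)%MS.
  by exists c; split => // j; apply: col3_of_sub; apply: claim.
move=> j; apply: contraT => ncj.
have j0 : j != 0 by apply: contraNneq ncj => ->.
have j1 : j != 1 by apply: contraNneq ncj => ->.
pose pi := (L 0 + L 1)%MS.
have rpi : \rank pi = 3%N by apply: rS.
have Ljpi : (L j <= pi)%MS.
  pose A0 := (L j :&: L 0)%MS; pose A1 := (L j :&: L 1)%MS.
  have r01 : \rank (A0 :&: A1)%MS = 0%N.
    apply/eqP; rewrite -leqn0 leqNgt; apply/negP => pos.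
    have s : (A0 :&: A1 <= c)%MS.
      apply: submx_trans capc; rewrite sub_capmx.
      by rewrite (submx_trans (capmxSl _ _) (capmxSr _ _)) (submx_trans (capmxSr _ _) (capmxSr _ _)).
    have : (c <= A0 :&: A1)%MS by apply: sub_of_rank s _; rewrite rc.
    move=> cA; move: ncj; rewrite (submx_trans cA) //.
    exact: submx_trans (capmxSl _ _) (capmxSl _ _).
  have rA : \rank (A0 + A1)%MS = 2%N.
    have := mxrank_sum_cap A0 A1; rewrite r01 addn0 /A0 /A1 !rC //; by rewrite eq_sym.
  have : (L j <= A0 + A1)%MS.
    by apply: sub_of_rank; rewrite ?rA ?rL // addsmx_sub !capmxSl.
  move/submx_trans; apply; apply: addsmxS; exact: capmxSr.
have [k nk] : exists k, ~~ (L k <= pi)%MS.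
  apply: NNPP => hnot; apply: hs; exists (col_mx (u 0) (col_mx (v 0) (u 1))) => k.
  have Lk : (L k <= pi)%MS.
    by apply/negPn/negP => h; apply: hnot; exists k.
  have piP : (pi <= col_mx (u 0) (col_mx (v 0) (u 1)))%MS.
    rewrite -addsmxE -(adds_eqmx (eqmx_refl _) (addsmxE _ _)) addsmxA.
    apply: sub_of_rank; first by rewrite /pi /L; msub.
    by rewrite rpi; apply: hn.
  apply/andP; split; apply: (submx_trans _ piP); apply: (submx_trans _ Lk).
  - exact: addsmxSl.
  - exact: addsmxSr.
have nk0 : k != 0 by apply: contraNneq nk => ->; rewrite /pi addsmxSl.
have nk1 : k != 1 by apply: contraNneq nk => ->; rewrite /pi addsmxSr.
have nkj : k != j by apply: contraNneq nk => ->.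
pose M := (L k :&: pi)%MS.
have rM : (\rank M <= 1)%N.
  have := mxrank_sum_cap (L k) pi; rewrite rL rpi.
  have : (4 <= \rank (L k + pi)%MS)%N.
    rewrite ltnNge; apply/negP => r3.
    have : (L k + pi <= pi)%MS by apply: sub_of_rank; rewrite ?addsmxSr ?rpi.
    by rewrite addsmx_sub (negbTE nk).
  by move=> h4 e; move: h4; rewrite -(leq_add2r (\rank M)) e -[(2 + 3)%N]/(4 + 1)%N leq_add2l.
have McapB : forall l, l != k -> (L l <= pi)%MS -> (M <= L l)%MS /\ (L k :&: L l <= M)%MS.
  move=> l nlk Lpi.
  have BM : (L k :&: L l <= M)%MS by apply: capmxS.
  split => //; apply: submx_trans (capmxSr (L k) _).
  by apply: sub_of_rank BM _; rewrite rC // eq_sym.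
have [M0 _] := McapB 0 (ltac:(by rewrite eq_sym)) (addsmxSl _ _).
have [M1 _] := McapB 1 (ltac:(by rewrite eq_sym)) (addsmxSr _ _).
have [_ Bj] := McapB j (ltac:(by rewrite eq_sym)) Ljpi.
have Mc : (M <= c)%MS by apply: submx_trans capc; rewrite sub_capmx M0 M1.
have cB : (c <= L k :&: L j)%MS.
  by apply: sub_of_rank (submx_trans Bj Mc) _; rewrite rc rC.
by move: ncj; rewrite (submx_trans cB) ?capmxSr.
Qed.
End Pencil.


Section Net3.
Variables (R : realFieldType) (n : nat).
Notation vec := 'rV[R]_(n.+1).
Variable x : int -> int -> vec.
Hypothesis GP : general_position x.

Lemma perm4 (a b c d : vec) : (a + b + c + d)%MS = (a + d + b + c)%MS.
Proof. by rewrite -!addsmxA [(d + (b + c))%MS]addsmxC -addsmxA. Qed.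

Lemma lap1_ex : Qnet x -> forall i j, exists y, laplace1 x i j y.
Proof.
move=> Q i j.
have [y [ny y1 y2]] : exists y : vec, [/\ y != 0, (y <= x i j + x (i + 1) j)%MS &
     (y <= x i (j + 1) + x (i + 1) (j + 1))%MS].
  apply: ex_cap.
  - have := Q i j; rewrite cop4E.
    by rewrite -!addsmxA [(x (i + 1) (j + 1) + x i (j + 1))%MS]addsmxC.
  - by apply: (r2row GP); apply/eqP; lia.
  - by apply: (r2row GP); apply/eqP; lia.
by exists y; split => //; split; apply: col3_of_sub.
Qed.

Lemma Drow : Qnet x ->
  (forall i j j' y y', laplace1 x i j y -> laplace1 x i j' y' -> proj_eq y y') ->
  forall i, rows_in_perspective x i (i + 1).
Proof.
move=> Q hv i; have [y0 l0] := lap1_ex Q i 0.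
exists y0; split; first by case: l0.
move=> j; have [yj lj] := lap1_ex Q i j.
have [_ [cj _]] := lj.
apply: (col3_mono cj); apply: proj_sub; exact: hv lj l0.
Qed.

Lemma Arow : multiQnet x -> forall i, rows_in_perspective x i (i + 1).
Proof.
move=> M i; apply: (pencil (u := x i) (v := x (i + 1))).
- move=> j j' njj; have := M i (i + 1) j j' (ltac:(apply/eqP; lia)) njj.
  by rewrite cop4E perm4.
- move=> j j' njj; apply: (gp3 GP); rewrite xpair_eqE ?negb_and; apply/orP.
  + by left; apply/eqP; lia.
  + by right.
  + by left; apply/eqP; lia.
- by case: GP => _ [_ [H _]].
Qed.

End Net3.

Section Transp.
Variables (R : realFieldType) (n : nat).
Notation vec := 'rV[R]_(n.+1).
Variable x : int -> int -> vec.

Definition xt := fun i j => x j i.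

Lemma GPt : general_position x -> general_position xt.
Proof.
case=> nz [nc [s1 s2]]; split; first by move=> i j; apply: nz.
split; last by split.
move=> i1 j1 i2 j2 i3 j3 d12 d13 d23; apply: nc; rewrite xpair_eqE andbC -xpair_eqE //.
Qed.

Lemma Qt : Qnet x -> Qnet xt.
Proof.
move=> Q i j; have := Q j i; rewrite /xt !cop4E.
by rewrite -!addsmxA [(x (j + 1) (i + 1) + x j (i + 1))%MS]addsmxC
  [(x (j + 1) i + (x j (i + 1) + x (j + 1) (i + 1)))%MS]addsmxC -!addsmxA.
Qed.

Lemma Mt : multiQnet x -> multiQnet xt.
Proof.
move=> M i0 i1 j0 j1 ni nj; have := M j0 j1 i0 i1 nj ni; rewrite /xt !cop4E.
by rewrite -!addsmxA [(x j1 i1 + x j1 i0)%MS]addsmxC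
  [(x j0 i1 + (x j1 i0 + x j1 i1))%MS]addsmxC -!addsmxA.
Qed.

Lemma Rt p q : repr_pq x p q -> repr_pq xt q p.
Proof. by move=> H i j; rewrite addrC; apply: H. Qed.

End Transp.


Theorem theorem2p3 (R : realFieldType) (n : nat) (x : int -> int -> 'rV[R]_(n.+1)) :
  Qnet x -> general_position x ->
  [<->
    (* (i) *) multiQnet x;
    (* (ii) *) (forall i0 i1 : int, i0 != i1 -> rows_in_perspective x i0 i1) /\
               (forall j0 j1 : int, j0 != j1 -> cols_in_perspective x j0 j1);
    (* (iii) *) (forall i : int, rows_in_perspective x i (i + 1)) /\
                (forall j : int, cols_in_perspective x j (j + 1));
    (* (iv) *) exists p q : int -> 'rV[R]_(n.+1),
                 forall i j : int, p i + q j != 0 /\ proj_eq (x i j) (p i + q j);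
    (* (v) *) (forall i j j' y y', laplace1 x i j y -> laplace1 x i j' y' -> proj_eq y y') /\
              (forall i i' j y y', laplace2 x i j y -> laplace2 x i' j y' -> proj_eq y y')
  ].
Proof.
move=> Q G.
have Gt := GPt G.
have B : (forall i, rows_in_perspective x i (i + 1)) -> (forall j, cols_in_perspective x j (j + 1)) ->
  exists p q, repr_pq x p q by move=> h1 h2; apply: constrB.
tfae.
- move=> M; have [p [q H]] := B (Arow G M) (Arow Gt (Mt M)).
  split=> [i0 i1 h|j0 j1 h]; first exact: (C1row G H h).
  exact: (C1row Gt (Rt H) h).
- by case=> h1 h2; split=> [i|j]; [apply: h1 | apply: h2]; apply/eqP; lia.
- by case=> h1 h2; apply: B.
- case=> p [q H]; split.
    by move=> i j j' y y' l1 l2; exact: (C4row G H l1 l2).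
  by move=> i i' j y y' l1 l2; exact: (C4row Gt (Rt H) l1 l2).
- case=> h1 h2; have [p [q H]] := B (Drow G Q h1) (Drow Gt (Qt Q) (fun i j j' y y' l1 l2 => h2 j j' i y y' l1 l2)).
  exact: C0 H.
Qed.
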